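(* Let $q=p^k$ with $p$ prime, and let $L\subseteq[q-1]$. Let $\mathcal{F}\subseteq2^{[n]}$ be $q$-modular $L$-differencing Sperner. If $\sum_{\ell\in L}v_p(\ell)<k$, then $$|\mathcal{F}|\le\sum_{i=0}^{|L|}\binom{n}{i}.$$
   Context: $v_p(m)$ is the exponent of $p$ in the integer $m$. For $L\subseteq[q-1]$, $\mathcal{F}\subseteq2^{[n]}$ is $q$-modular $L$-differencing Sperner if for all distinct $A,B\in\mathcal{F}$, $|A\setminus B|\equiv\ell\pmod q$ for some $\ell\in L$. *)

(* Defs.v *)
From mathcomp Require Import all_boot.
Set Implicit Arguments. Unset Strict Implicit. Unset Printing Implicit Defensive.

Definition subset_range (L : seq nat) (q : nat) : bool :=
  all (fun l => (0 < l) && (l < q)) L.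

Definition modular_L_differencing_Sperner (n q : nat) (L : seq nat)
    (F : {set {set 'I_n}}) : Prop :=
  forall A B, A \in F -> B \in F -> A != B ->
    exists2 l, l \in L & #|A :\: B| = l %[mod q].

(* Main.v *)
Require Import Defs.
From mathcomp Require Import all_boot all_algebra.
Set Implicit Arguments. Unset Strict Implicit. Unset Printing Implicit Defensive.
Import GRing.Theory.
Open Scope ring_scope.

Definition hrow n N (Bs : 'I_N -> {set 'I_n}) (S : {set 'I_n}) : 'rV[rat]_N :=
  \row_j ((S \subset ~: Bs j)%:R).
Definition Tset n m := [set S : {set 'I_n} | (#|S| <= m)%N].
Definition Qm n N (Bs : 'I_N -> {set 'I_n}) m : 'M[rat]_(#|Tset n m|, N) :=
  \matrix_(i, j) hrow Bs (enum_val i) 0 j.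

Lemma hrow_sub n N (Bs : 'I_N -> {set 'I_n}) m (S : {set 'I_n}) :
  (#|S| <= m)%N -> (hrow Bs S <= Qm Bs m)%MS.
Proof.
move=> HS. have HT : S \in Tset n m by rewrite inE.
have -> : hrow Bs S = row (enum_rank_in HT S) (Qm Bs m).
  by apply/rowP => j; rewrite !mxE enum_rankK_in.
exact: row_sub.
Qed.

Lemma card_setD_sum n (A B : {set 'I_n}) :
  (#|A :\: B|)%:R = \sum_(a in A) ((a \notin B)%:R : rat).
Proof.
rewrite -sum1_card natr_sum.
rewrite [RHS](eq_bigr (fun a => if a \notin B then 1 else 0)); last by move=> a _; case: (a \notin B).
rewrite -big_mkcondr /=.
apply: eq_bigl => a; by rewrite inE andbC.
Qed.

Lemma had_step n N (Bs : 'I_N -> {set 'I_n}) m (A : {set 'I_n}) (c : rat)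
   (v : 'rV[rat]_N) :
  (v <= Qm Bs m)%MS ->
  ((v *m diag_mx (\row_j ((#|(A :\: Bs j)%SET|)%:R + c)))%R <= Qm Bs m.+1)%MS.
Proof.
move=> Hv; apply: submx_trans (submxMr _ Hv) _.
apply/row_subP => i; rewrite row_mul.
set S := enum_val i.
have HS : (#|S| <= m)%N by have := enum_valP i; rewrite inE.
have -> : row i (Qm Bs m) = hrow Bs S by apply/rowP => j; rewrite !mxE.
have -> : hrow Bs S *m diag_mx (\row_j ((#|(A :\: Bs j)%SET|)%:R + c)) =
   c *: hrow Bs S + \sum_(a in A) hrow Bs (a |: S).
  apply/rowP => j; rewrite mul_mx_diag !mxE summxE card_setD_sum.
  case: (boolP (S \subset ~: Bs j)) => Hs.
  - rewrite mul1r mulr1 addrC; congr (_ + _); apply: eq_bigr => a _.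
    by rewrite !mxE subUset Hs andbT sub1set inE.
  - rewrite mul0r mulr0 add0r big1 // => a _.
    by rewrite !mxE subUset (negbTE Hs) andbF.
apply: addmx_sub; first by apply: scalemx_sub; apply: hrow_sub; apply: leqW.
apply: summx_sub => a _; apply: hrow_sub.
by rewrite cardsU1; case: (a \notin S) => /=; rewrite ?add0n ?add1n ?ltnS // leqW.
Qed.
Close Scope ring_scope.
Open Scope ring_scope.

Definition prow n N (Bs : 'I_N -> {set 'I_n}) (A : {set 'I_n}) (cs : seq nat)
  : 'rV[rat]_N := \row_j \prod_(c <- cs) ((#|(A :\: Bs j)%SET|)%:R + c%:R).

Lemma prow_sub n N (Bs : 'I_N -> {set 'I_n}) A cs :
  (prow Bs A cs <= Qm Bs (size cs))%MS.
Proof.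
elim: cs => [|c cs IH] /=.
  have -> : prow Bs A [::] = hrow Bs set0.
    by apply/rowP => j; rewrite !mxE big_nil sub0set.
  by apply: hrow_sub; rewrite cards0.
have -> : prow Bs A (c :: cs) =
   (prow Bs A cs *m diag_mx (\row_j ((#|(A :\: Bs j)%SET|)%:R + c%:R)))%R.
  by apply/rowP => j; rewrite mul_mx_diag !mxE big_cons mulrC.
exact: had_step.
Qed.

Close Scope ring_scope.

Lemma card_Tset n m : #|Tset n m| = \sum_(0 <= i < m.+1) 'C(n, i).
Proof.
elim: m => [|m IH].
  rewrite big_nat1; have := card_draws 'I_n 0; rewrite card_ord => <-.
  apply: eq_card => S.
  by rewrite !inE leqn0.
rewrite big_nat_recr //= -IH; have := card_draws 'I_n m.+1; rewrite card_ord => <-.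
have -> : Tset n m.+1 = Tset n m :|: [set S : {set 'I_n} | #|S| == m.+1].
  by apply/setP => S; rewrite !inE leq_eqVlt ltnS orbC.
rewrite cardsU.
have -> : Tset n m :&: [set S : {set 'I_n} | #|S| == m.+1] = set0.
  apply/setP => S; rewrite !inE; apply/negbTE; apply/negP => /andP[H1 /eqP H2].
  by rewrite H2 ltnn in H1.
by rewrite cards0 subn0.
Qed.

Lemma logn_sub p k l : prime p -> 0 < l -> l < p ^ k ->
  logn p (p ^ k - l) <= logn p l.
Proof.
move=> pp l0 lk; set a := logn p l.
have pos : 0 < p ^ k - l by rewrite subn_gt0.
rewrite leqNgt; apply/negP => Ha.
have H1 : p ^ a.+1 %| p ^ k - l by rewrite pfactor_dvdn.
have Hak : a < k.
  have : p ^ a <= l by apply: dvdn_leq => //; rewrite pfactor_dvdn.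
  move=> H; have := leq_ltn_trans H lk; rewrite ltn_exp2l //; exact: prime_gt1.
have H2 : p ^ a.+1 %| p ^ k by apply: dvdn_exp2l.
have H3 : p ^ a.+1 %| l.
  have := dvdn_sub H2 H1; rewrite subKn //; exact: ltnW.
by move: H3; rewrite pfactor_dvdn // ltnn.
Qed.

Lemma logn_prod_bound p k (L : seq nat) : prime p ->
  all (fun l => (0 < l) && (l < p ^ k)) L ->
  0 < \prod_(l <- L) (p ^ k - l) /\
  logn p (\prod_(l <- L) (p ^ k - l)) <= \sum_(l <- L) logn p l.
Proof.
move=> pp; elim: L => [|l L IH] /=; first by rewrite !big_nil logn1.
case/andP=> /andP[l0 lk] /IH [Hpos Hle].
have pl : 0 < p ^ k - l by rewrite subn_gt0.
rewrite !big_cons muln_gt0 pl Hpos; split => //.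
rewrite lognM //; apply: leq_add => //; exact: logn_sub.
Qed.
Import Num.Theory.

Theorem mainTheorem12 (p k n : nat) (L : seq nat) (F : {set {set 'I_n}}) :
  prime p -> uniq L -> subset_range L (p ^ k) ->
  modular_L_differencing_Sperner (p ^ k) L F ->
  \sum_(l <- L) logn p l < k ->
  #|F| <= \sum_(0 <= i < (size L).+1) 'C(n, i).
Proof.
move=> pp _ HL HF Hk.
set q := p ^ k; set N := #|F|.
pose Bs := fun i : 'I_N => (enum_val i : {set 'I_n}).
have BsF i : Bs i \in F by exact: enum_valP.
have Bsinj : injective Bs by exact: enum_val_inj.
pose E := fun i j : 'I_N => \prod_(l <- L) (#|Bs i :\: Bs j| + (q - l)).
set dd := \prod_(l <- L) (q - l).
have [ddpos ddle] := logn_prod_bound pp HL.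
set s := logn p dd.
have Hs : s < k by exact: leq_ltn_trans ddle Hk.
have Hdiag i : E i i = dd.
  by rewrite /E setDv cards0; apply: eq_bigr => l _; rewrite add0n.
have Hoff i j : i != j -> p ^ s.+1 %| E i j.
  move=> Hij.
  have Hne : Bs i != Bs j by apply: contra Hij => /eqP /Bsinj ->.
  have [l0 l0L Hmod] := HF _ _ (BsF i) (BsF j) Hne.
  have l0q : l0 < q by have := allP HL l0 l0L; case/andP.
  apply: (dvdn_trans (dvdn_exp2l p Hs)).
  rewrite /E (big_rem l0 l0L) /=; apply: dvdn_mulr.
  by rewrite /dvdn -modnDml Hmod modnDml subnKC ?modnn // ltnW.
have Hdvd i j : p ^ s %| E i j.
  case: (eqVneq i j) => [->|Hij]; first by rewrite Hdiag pfactor_dvdn.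
  exact: dvdn_trans (dvdn_exp2l p (leqnSn s)) (Hoff i j Hij).
have Hnd : ~~ (p %| dd %/ p ^ s).
  apply/negP => H.
  have Hd0 : p ^ s %| dd by rewrite pfactor_dvdn.
  have : p ^ s.+1 %| dd.
    by rewrite -(divnK Hd0) expnSr mulnC dvdn_mul.
  by rewrite pfactor_dvdn // ltnn.
Open Scope ring_scope.
pose M' : 'M[rat]_N := (\matrix_(i, j) ((E i j %/ p ^ s)%:R))%R.
have Msub : (M' <= Qm Bs (size L))%MS.
  apply/row_subP => i.
  have -> : row i M' = ((p ^ s)%:R^-1 : rat) *: prow Bs (Bs i) [seq (q - l)%N | l <- L].
    apply/rowP => j; rewrite !mxE big_map.
    under eq_bigr => l _ do rewrite -natrD.
    rewrite -natr_prod.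
    rewrite -/(E i j) -[in RHS](divnK (Hdvd i j)) natrM mulrC mulfK //.
    by rewrite natrX expf_neq0 // pnatr_eq0 -lt0n prime_gt0.
  apply: scalemx_sub; have := prow_sub Bs (Bs i) [seq (q - l)%N | l <- L].
  by rewrite size_map.
pose MZ : 'M[int]_N := \matrix_(i, j) ((E i j %/ p ^ s)%N%:Z).
have HM : M' = map_mx (intr : int -> rat) MZ by apply/matrixP => i j; rewrite !mxE.
have HP : map_mx (intr : int -> 'F_p) MZ = ((dd %/ p ^ s)%N%:R)%:M.
  apply/matrixP => i j; rewrite !mxE /=.
  case: (eqVneq i j) => [->|Hij]; first by rewrite Hdiag mulr1n.
  rewrite mulr0n; apply/eqP; rewrite -(dvdn_pcharf (pchar_Fp pp)).
  have Hij' := Hoff i j Hij.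
  by rewrite -(divnK (Hdvd i j)) expnSr mulnC dvdn_pmul2r ?expn_gt0 ?prime_gt0 // in Hij'.
have HdZ : \det MZ != 0.
  apply/negP => /eqP H0.
  have := det_map_mx (intr : {rmorphism int -> 'F_p}) MZ.
  rewrite HP det_scalar H0 rmorph0 => /eqP.
  rewrite expf_eq0 -(dvdn_pcharf (pchar_Fp pp)) (negbTE Hnd) andbF //.
have Hunit : M' \in unitmx.
  rewrite unitmxE unitfE HM (det_map_mx (intr : {rmorphism int -> rat})).
  by rewrite intr_eq0.
have := mxrankS Msub; rewrite mxrank_unit // => HN.
rewrite -card_Tset; apply: leq_trans HN _; exact: rank_leq_row.
Qed.
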